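(* For all $x,y,z\in\mathbb{C}^{n\times r}$, $$\|x-y\|_2\|x+y\|_2\leq\|x-z\|_2\|x+z\|_2+\|z-y\|_2\|z+y\|_2.$$
   Context: $\|\cdot\|_2$ denotes the Frobenius norm. *)

(* Defs.v *)
From mathcomp Require Import all_boot all_order all_algebra.
From mathcomp Require Import complex.
From mathcomp Require Import reals.
Set Implicit Arguments. Unset Strict Implicit. Unset Printing Implicit Defensive.
Import Order.TTheory GRing.Theory Num.Theory.
Local Open Scope ring_scope.

Definition frob_norm (R : realType) (n r : nat) (A : 'M[R[i]]_(n, r)) : R :=
  Num.sqrt (\sum_(i < n) \sum_(j < r) (ComplexField.Normc.normc (A i j)) ^+ 2).

(* Main.v *)
Require Import Defs.
From mathcomp Require Import all_boot all_order all_algebra.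
From mathcomp Require Import complex.
From mathcomp Require Import reals.
From mathcomp Require Import ring lra.
Import Order.TTheory GRing.Theory Num.Theory.
Local Open Scope ring_scope.
Set Implicit Arguments. Unset Strict Implicit.

Section Flat.
Variables (R : realType) (I : finType).

Definition ip (f g : I -> R) : R := \sum_k f k * g k.
Definition n2 (f : I -> R) := ip f f.
Definition nrm (f : I -> R) := Num.sqrt (n2 f).
Definition lc (a : R) (f : I -> R) (b : R) (g : I -> R) := fun k => a * f k + b * g k.

Lemma n2_ge0 f : 0 <= n2 f.
Proof. by apply: sumr_ge0 => k _; rewrite -expr2 sqr_ge0. Qed.

Lemma ipC f g : ip f g = ip g f.
Proof. by apply: eq_bigr => k _; rewrite mulrC. Qed.

Lemma ip_lc a f b g c h d l :
  ip (lc a f b g) (lc c h d l) =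
  a * c * ip f h + a * d * ip f l + b * c * ip g h + b * d * ip g l.
Proof.
rewrite /ip /lc.
transitivity (\sum_k (a * c * (f k * h k) + a * d * (f k * l k)
     + b * c * (g k * h k) + b * d * (g k * l k))).
  by apply: eq_bigr => k _; ring.
by rewrite !big_split /= -!mulr_sumr.
Qed.

Lemma ip_ext f f' g g' : f =1 f' -> g =1 g' -> ip f g = ip f' g'.
Proof. by move=> Hf Hg; apply: eq_bigr => k _; rewrite Hf Hg. Qed.

Lemma CS f g : ip f g <= nrm f * nrm g.
Proof.
have [Hb|Hb] := lerP (ip f g) 0.
  by apply: (le_trans Hb); rewrite mulr_ge0 ?sqrtr_ge0.
set A := n2 f; set B := ip f g; set C := n2 g.
have HC : 0 < C.
  rewrite lt_def n2_ge0 andbT; apply/negP => /eqP C0.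
  have g0 : forall k, g k = 0.
    move=> k; have : g k * g k = 0.
      apply: (@psumr_eq0P _ _ predT (fun k => g k * g k)) => //.
      by move=> i _; rewrite -expr2 sqr_ge0.
    by move/eqP; rewrite mulf_eq0 orbb => /eqP.
  move: Hb; rewrite /B /ip big1 ?ltxx // => k _; by rewrite g0 mulr0.
have key : 0 <= C * (A * C - B ^+ 2).
  have -> : C * (A * C - B ^+ 2) = n2 (lc C f (- B) g).
    rewrite /n2 ip_lc (ipC g f); rewrite /A /B /C /n2; ring.
  exact: n2_ge0.
have H2 : B ^+ 2 <= A * C.
  by rewrite -subr_ge0; move: key; rewrite pmulr_rge0.
rewrite /nrm -sqrtrM ?n2_ge0 //.
have -> : B = Num.sqrt (B ^+ 2) by rewrite sqrtr_sqr ger0_norm // ltW.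
by rewrite ler_sqrt // mulr_ge0 ?n2_ge0.
Qed.

Lemma nrm_sq f : nrm f ^+ 2 = n2 f.
Proof. by rewrite sqr_sqrtr ?n2_ge0. Qed.

Lemma ptolemy q r s :
  nrm r * nrm (lc 1 q (-1) s) <= nrm q * nrm (lc 1 r (-1) s) + nrm (lc 1 r (-1) q) * nrm s.
Proof.
set u := lc (n2 r) q (- n2 q) r; set v := lc (n2 s) r (- n2 r) s.
have Hu : n2 u = n2 q * n2 r * n2 (lc 1 r (-1) q).
  by rewrite /u /n2 !ip_lc ?(ipC r q); ring.
have Hv : n2 v = n2 r * n2 s * n2 (lc 1 r (-1) s).
  by rewrite /v /n2 !ip_lc ?(ipC s r); ring.
have Huv : ip u v = n2 r * (ip q r * n2 s - ip q s * n2 r - n2 q * n2 s + ip r s * n2 q).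
  by rewrite /u /v /n2 !ip_lc; ring.
have E1 : n2 (lc 1 q (-1) s) = n2 q - 2 * ip q s + n2 s.
  by rewrite /n2 !ip_lc (ipC s q); ring.
have E2 : n2 (lc 1 r (-1) s) = n2 r - 2 * ip r s + n2 s.
  by rewrite /n2 !ip_lc (ipC s r); ring.
have E3 : n2 (lc 1 r (-1) q) = n2 q - 2 * ip q r + n2 r.
  by rewrite /n2 !ip_lc (ipC r q); ring.
have := CS u v.
rewrite Huv /nrm Hu Hv !sqrtrM ?mulr_ge0 ?n2_ge0 // -!/(nrm _).
set nq := nrm q; set nr := nrm r; set ns := nrm s.
set d1 := nrm (lc 1 r (-1) q); set d2 := nrm (lc 1 r (-1) s); set d3 := nrm (lc 1 q (-1) s).
have Sq : nq ^+ 2 = n2 q by rewrite nrm_sq.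
have Sr : nr ^+ 2 = n2 r by rewrite nrm_sq.
have Ss : ns ^+ 2 = n2 s by rewrite nrm_sq.
have S1 : d1 ^+ 2 = n2 q - 2 * ip q r + n2 r by rewrite nrm_sq.
have S2 : d2 ^+ 2 = n2 r - 2 * ip r s + n2 s by rewrite nrm_sq.
have S3 : d3 ^+ 2 = n2 q - 2 * ip q s + n2 s by rewrite nrm_sq.
have P : forall f, 0 <= nrm f by move=> f; exact: sqrtr_ge0.
move=> H.
have [nr0|nrpos] := eqVneq nr 0.
  by rewrite nr0 mul0r addr_ge0 // mulr_ge0 ?P.
have nrp : 0 < nr by rewrite lt_def nrpos P.
set K := (ip q r * n2 s - ip q s * n2 r - n2 q * n2 s + ip r s * n2 q).
have HK : K <= nq * d1 * ns * d2.
  rewrite -(ler_pM2l (exprn_gt0 2 nrp)) Sr.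
  have -> : n2 r * (nq * d1 * ns * d2) = nq * nr * d1 * (nr * ns * d2).
    by rewrite -Sr; ring.
  exact: H.
have D : (nq * d2 + d1 * ns) ^+ 2 - (nr * d3) ^+ 2 = 2 * (nq * d1 * ns * d2 - K).
  rewrite sqrrD !exprMn Sq Sr Ss S1 S2 S3 /K; ring.
rewrite -ler_sqr ?nnegrE ?addr_ge0 ?mulr_ge0 ?P //.
by rewrite -subr_ge0 D mulr_ge0 // subr_ge0.
Qed.

End Flat.

Lemma nrm_ext (R : realType) (I : finType) (f g : I -> R) : f =1 g -> nrm f = nrm g.
Proof. by move=> H; rewrite /nrm /n2 (ip_ext H H). Qed.

Lemma nrmN (R : realType) (I : finType) (f : I -> R) : nrm (fun k => - f k) = nrm f.
Proof. by rewrite /nrm /n2 /ip; congr Num.sqrt; apply: eq_bigr => k _; rewrite mulrNN. Qed.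

Section Mat.
Variables (R : realType) (n r : nat).
Definition flat (M : 'M[R[i]]_(n, r)) : ('I_n * 'I_r) * bool -> R :=
  fun k => if k.2 then complex.Re (M k.1.1 k.1.2) else complex.Im (M k.1.1 k.1.2).

Lemma flatD A B k : flat (A + B) k = flat A k + flat B k.
Proof. by case: k => [[i j] []]; rewrite /flat /= mxE; case: (A i j); case: (B i j). Qed.

Lemma flatN A k : flat (- A) k = - flat A k.
Proof. by case: k => [[i j] []]; rewrite /flat /= mxE; case: (A i j). Qed.

Lemma frob_flat M : frob_norm M = nrm (flat M).
Proof.
rewrite /frob_norm /nrm /n2 /ip; congr Num.sqrt.
rewrite [RHS](eq_bigr (fun p => (fun a b => flat M (a, b) * flat M (a, b)) p.1 p.2));
  last by case.
rewrite -(pair_bigA _ (fun a b => flat M (a, b) * flat M (a, b))) /=.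
rewrite [RHS](eq_bigr (fun p => (fun a b => \sum_(c : bool) flat M ((a, b), c) * flat M ((a, b), c)) p.1 p.2));
  last by case.
rewrite -(pair_bigA _ (fun a b => \sum_(c : bool) flat M ((a, b), c) * flat M ((a, b), c))) /=.
apply: eq_bigr => i _; apply: eq_bigr => j _.
rewrite big_bool /= /flat /=.
case: (M i j) => a b /=.
rewrite sqr_sqrtr ?addr_ge0 ?sqr_ge0 // !expr2 addrC.
Qed.
End Mat.

Theorem lemmaA1 (R : realType) (n r : nat) (x y z : 'M[R[i]]_(n, r)) :
  frob_norm (x - y) * frob_norm (x + y)
  <= frob_norm (x - z) * frob_norm (x + z) + frob_norm (z - y) * frob_norm (z + y).
Proof.
set A := flat (x - z); set C := flat (z - y); set D := flat (z + y).
have := ptolemy A (lc 1 A 1 C) (fun k => - D k).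
rewrite nrmN !frob_flat.
have -> : nrm (lc 1 A 1 C) = nrm (flat (x - y)).
  by apply: nrm_ext => k; rewrite /lc /A /C !flatD !flatN; ring.
have -> : nrm (lc 1 A (-1) (fun k => - D k)) = nrm (flat (x + y)).
  by apply: nrm_ext => k; rewrite /lc /A /D !flatD !flatN; ring.
have -> : nrm (lc 1 (lc 1 A 1 C) (-1) (fun k => - D k)) = nrm (flat (x + z)).
  by apply: nrm_ext => k; rewrite /lc /A /C /D !flatD !flatN; ring.
have -> : nrm (lc 1 (lc 1 A 1 C) (-1) A) = nrm (flat (z - y)).
  by apply: nrm_ext => k; rewrite /lc /A /C !flatD !flatN; ring.
done.
Qed.
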